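(* Let $m$ be a positive integer divisible by $4$. Then the group $BT(2,m)$ is infinite.
   Context: For integers $n,m\ge1$, $BT(n,m)$ denotes the quotient of the free group $\mathbb{F}_n$ on $n$ generators by the normal subgroup generated by all $x^m$, where $x$ runs over the primitive elements of $\mathbb{F}_n$ (elements belonging to some free basis). *)

(* Defs.v *)
(* Free groups are not in the library: we model
   F_n by words over the letters x_i^{+-1} modulo free reduction, and
   BT(n,m) by words modulo the congruence generated by free cancellation and
   deletion/insertion of x^m for primitive x. *)
From Stdlib Require Import Relations.
From mathcomp Require Import all_boot.
Set Implicit Arguments. Unset Strict Implicit. Unset Printing Implicit Defensive.

(* a letter (i, false) is the generator x_i, (i, true) is x_i^-1 *)
Definition letter (n : nat) := ('I_n * bool)%type.
Definition word (n : nat) := seq (letter n).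

Definition linv n (a : letter n) : letter n := (a.1, ~~ a.2).
Definition winv n (w : word n) : word n := rev (map (@linv n) w).

Definition wpow n (w : word n) (k : nat) : word n := flatten (nseq k w).

Inductive free_step n : word n -> word n -> Prop :=
| FreeCancel (s t : word n) (a : letter n) :
    free_step (s ++ a :: linv a :: t) (s ++ t).
Definition free_eq n : relation (word n) := clos_refl_sym_trans _ (@free_step n).

Fixpoint subst n (b : 'I_n -> word n) (w : word n) : word n :=
  match w with
  | [::] => [::]
  | a :: t => (if a.2 then winv (b a.1) else b a.1) ++ subst b t
  end.

(* b is a free basis of F_n: the induced endomorphism x_i |-> b i is
   bijective on F_n (injective and surjective modulo free equality) *)
Definition is_free_basis n (b : 'I_n -> word n) : Prop :=
  (forall u v, free_eq (subst b u) (subst b v) -> free_eq u v) /\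
  (forall v, exists u, free_eq (subst b u) v).

Definition primitive n (w : word n) : Prop :=
  exists (b : 'I_n -> word n) (i : 'I_n), is_free_basis b /\ free_eq (b i) w.

Inductive bt_step (n m : nat) : word n -> word n -> Prop :=
| BTFree (s t : word n) (a : letter n) :
    @bt_step n m (s ++ a :: linv a :: t) (s ++ t)
| BTRel (s t w : word n) : primitive w ->
    @bt_step n m (s ++ wpow w m ++ t) (s ++ t).
Definition bt_eq (n m : nat) : relation (word n) := clos_refl_sym_trans _ (@bt_step n m).

(* Main.v *)
Require Import Defs.
From Stdlib Require Import Relations.
From mathcomp Require Import all_boot.
From mathcomp Require Import all_algebra ring.

Set Implicit Arguments. Unset Strict Implicit. Unset Printing Implicit Defensive.

Section Aux.
Import GRing.Theory.
Local Open Scope ring_scope.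

Definition quat := (int * int * int * int)%type.

Definition qmul (x y : quat) : quat :=
  let '(x0, x1, x2, x3) := x in let '(y0, y1, y2, y3) := y in
  (x0*y0 - x1*y1 - x2*y2 - x3*y3,
   x0*y1 + x1*y0 + x2*y3 - x3*y2,
   x0*y2 - x1*y3 + x2*y0 + x3*y1,
   x0*y3 + x1*y2 - x2*y1 + x3*y0).
Definition qadd (x y : quat) : quat :=
  let '(x0, x1, x2, x3) := x in let '(y0, y1, y2, y3) := y in
  (x0 + y0, x1 + y1, x2 + y2, x3 + y3).
Definition qneg (x : quat) : quat :=
  let '(x0, x1, x2, x3) := x in (- x0, - x1, - x2, - x3).
Definition qone : quat := (1, 0, 0, 0).
Definition qzero : quat := (0, 0, 0, 0).
Definition qm1 : quat := (-1, 0, 0, 0).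
Definition qi : quat := (0, 1, 0, 0).
Definition qj : quat := (0, 0, 1, 0).
Definition qk : quat := (0, 0, 0, 1).

Arguments qmul : simpl never.
Arguments qadd : simpl never.
Arguments qneg : simpl never.

Lemma qmulA x y z : qmul x (qmul y z) = qmul (qmul x y) z.
Proof.
case: x => [[[x0 x1] x2] x3]; case: y => [[[y0 y1] y2] y3];
case: z => [[[z0 z1] z2] z3]; rewrite /qmul; f_equal; [f_equal; [f_equal|] |]; ring.
Qed.

Lemma qmul_addr x y z : qmul x (qadd y z) = qadd (qmul x y) (qmul x z).
Proof.
case: x => [[[x0 x1] x2] x3]; case: y => [[[y0 y1] y2] y3];
case: z => [[[z0 z1] z2] z3]; rewrite /qmul /qadd; f_equal; [f_equal; [f_equal|] |]; ring.
Qed.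

Lemma qaddA x y z : qadd x (qadd y z) = qadd (qadd x y) z.
Proof.
case: x => [[[x0 x1] x2] x3]; case: y => [[[y0 y1] y2] y3];
case: z => [[[z0 z1] z2] z3]; rewrite /qadd; f_equal; [f_equal; [f_equal|] |]; ring.
Qed.

Lemma qmul1 x : qmul qone x = x.
Proof. case: x => [[[x0 x1] x2] x3]; rewrite /qmul /qone; f_equal; [f_equal; [f_equal|] |]; ring. Qed.
Lemma qmulr1 x : qmul x qone = x.
Proof. case: x => [[[x0 x1] x2] x3]; rewrite /qmul /qone; f_equal; [f_equal; [f_equal|] |]; ring. Qed.
Lemma qmul0 x : qmul x qzero = qzero.
Proof. case: x => [[[x0 x1] x2] x3]; rewrite /qmul /qzero; f_equal; [f_equal; [f_equal|] |]; ring. Qed.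
Lemma qadd0 x : qadd x qzero = x.
Proof. case: x => [[[x0 x1] x2] x3]; rewrite /qadd /qzero; f_equal; [f_equal; [f_equal|] |]; ring. Qed.
Lemma q0add x : qadd qzero x = x.
Proof. case: x => [[[x0 x1] x2] x3]; rewrite /qadd /qzero; f_equal; [f_equal; [f_equal|] |]; ring. Qed.
Lemma qaddm1 x : qadd x (qmul qm1 x) = qzero.
Proof. case: x => [[[x0 x1] x2] x3]; rewrite /qadd /qmul /qm1 /qzero; f_equal; [f_equal; [f_equal|] |]; ring. Qed.

Definition G := (quat * quat)%type.
Definition gmul (g h : G) : G := (qmul g.1 h.1, qadd g.2 (qmul g.1 h.2)).
Definition gone : G := (qone, qzero).

Lemma gmulA g h k : gmul g (gmul h k) = gmul (gmul g h) k.
Proof.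
case: g => q1 v1; case: h => q2 v2; case: k => q3 v3.
by rewrite /gmul /= qmulA qmul_addr qaddA qmulA.
Qed.
Lemma gmul1 g : gmul gone g = g.
Proof. case: g => q v; by rewrite /gmul /= !qmul1 q0add. Qed.

Definition gen (a : letter 2) : G :=
  if nat_of_ord a.1 == 0%N then
    (if a.2 then (qneg qi, qi) else (qi, qone))
  else (if a.2 then (qneg qj, qzero) else (qj, qzero)).

Definition eval (w : word 2) : G := foldr (fun a g => gmul (gen a) g) gone w.

Lemma eval_cat s t : eval (s ++ t) = gmul (eval s) (eval t).
Proof. elim: s => [|a s IH] /=; first by rewrite gmul1. by rewrite IH gmulA. Qed.

Lemma gen_inv a : gmul (gen a) (gen (linv a)) = gone.
Proof. by case: a => [[[|[|k]] Hk] []]. Qed.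

Lemma pow4 (g h : G) : qmul g.1 g.1 = qm1 ->
  gmul g (gmul g (gmul g (gmul g h))) = h.
Proof.
move=> hq; rewrite !gmulA.
have -> : gmul g g = (qm1, qadd g.2 (qmul g.1 g.2)) by rewrite /gmul hq.
set u := qadd _ _.
have -> : gmul (gmul (qm1, u) g) g = gmul (qm1, u) (gmul g g) by rewrite gmulA.
have -> : gmul g g = (qm1, u) by rewrite /gmul hq.
have -> : gmul (qm1, u) (qm1, u) = gone.
  by rewrite /gmul /= qaddm1.
by rewrite gmul1.
Qed.

End Aux.

Definition par (w : word 2) : bool * bool :=
  (odd (count (fun a : letter 2 => nat_of_ord a.1 == 0) w),
   odd (count (fun a : letter 2 => nat_of_ord a.1 == 1) w)).

Definition pxor (p q : bool * bool) := (p.1 (+) q.1, p.2 (+) q.2).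

Lemma par_cat s t : par (s ++ t) = pxor (par s) (par t).
Proof. by rewrite /par /pxor !count_cat !oddD. Qed.

Lemma par_winv w : par (winv w) = par w.
Proof. by rewrite /par /winv !count_rev !count_map. Qed.

Lemma par_free u v : free_eq u v -> par u = par v.
Proof.
elim; [| by [] | by move=> ? ? _ -> | by move=> ? ? ? _ -> _ ->].
move=> x y [s t a]; rewrite !par_cat /par /pxor /= !oddD.
by rewrite !(addbA (odd (_ == _))) !addbb.
Qed.

Definition o1 : 'I_2 := @Ordinal 2 1 isT.

Lemma ord2P (i : 'I_2) : i = ord0 \/ i = o1.
Proof. case: i => [[|[|k]] Hk]; [left|right|by []]; exact: val_inj. Qed.

Definition base (p : bool * bool) : quat :=
  match p with
  | (false, false) => qone
  | (true, false) => qi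
  | (false, true) => qj
  | (true, true) => qk
  end.

Lemma eval_lin w : (eval w).1 \in [:: base (par w); qneg (base (par w))].
Proof.
elim: w => [|a t IH]; first by vm_compute.
rewrite -cat1s par_cat eval_cat.
change ((gmul (eval [:: a]) (eval t)).1) with (qmul (eval [::a]).1 (eval t).1).
move: IH; case: (par t) => p1 p2.
case: a => i e; case: (ord2P i) => ->;
rewrite !inE => /orP[] /eqP ->; case: e; case: p1; case: p2; vm_compute; reflexivity.
Qed.

Lemma sq_lin w : par w != (false, false) -> qmul (eval w).1 (eval w).1 = qm1.
Proof.
move: (eval_lin w); case: (par w) => [[] []];
rewrite !inE => /orP[] /eqP -> // _; vm_compute; reflexivity.
Qed.

Lemma wpow_add n (w : word n) a b : wpow w (a + b) = wpow w a ++ wpow w b.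
Proof. by rewrite /wpow nseqD flatten_cat. Qed.

Lemma wpow4 w k : qmul (eval w).1 (eval w).1 = qm1 -> eval (wpow w (k * 4)) = gone.
Proof.
move=> h; elim: k => [|k IH]; first by [].
rewrite mulSn wpow_add eval_cat IH.
have -> : wpow w 4 = w ++ (w ++ (w ++ (w ++ [::]))) by [].
rewrite !eval_cat.
have -> : eval [::] = gone by [].
rewrite pow4 //.
Qed.

Definition lc (c0 c1 : bool) (P Q : bool * bool) :=
  ((c0 && P.1) (+) (c1 && Q.1), (c0 && P.2) (+) (c1 && Q.2)).

Lemma par_subst (b : 'I_2 -> word 2) u :
  exists c0 c1 : bool, par (subst b u) = lc c0 c1 (par (b ord0)) (par (b o1)).
Proof.
elim: u => [|a t [c0 [c1 IH]]]; first by exists false, false.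
rewrite /= par_cat IH; clear IH.
have -> : par (if a.2 then winv (b a.1) else b a.1) = par (b a.1)
  by case: a.2; rewrite ?par_winv.
case: a => i e /=; case: (ord2P i) => ->; [exists (~~ c0), c1 | exists c0, (~~ c1)];
case: (par (b ord0)) => [p q]; case: (par (b o1)) => [r s];
by case: c0; case: c1; case: p; case: q; case: r; case: s.
Qed.

Lemma prim_par w : primitive w -> par w != (false, false).
Proof.
case=> b [i [[_ Hs] Hw]].
rewrite -(par_free Hw).
case: (Hs [:: (ord0, false)]) => u0 /par_free H0.
case: (Hs [:: (o1, false)]) => u1 /par_free H1.
case: (par_subst b u0) H0 => c0 [c1 ->] H0.
case: (par_subst b u1) H1 => d0 [d1 ->] H1.
have key : forall p q r s c0 c1 d0 d1 : bool,
  (lc c0 c1 (p,q) (r,s) == (true,false)) ==> (lc d0 d1 (p,q) (r,s) == (false,true)) ==>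
  ((p,q) != (false,false)) && ((r,s) != (false,false)).
  by do 8! case.
move: H0 H1; case E0: (par (b ord0)) => [p q]; case E1: (par (b o1)) => [r s] H0 H1.
have := key p q r s c0 c1 d0 d1; rewrite H0 H1 /= => /andP[h0 h1].
by case: (ord2P i) => ->; rewrite ?E0 ?E1.
Qed.

Lemma bt_eval m w u : 4 %| m -> bt_eq m w u -> eval w = eval u.
Proof.
move=> h4; elim; [| by [] | by move=> ? ? _ -> | by move=> ? ? ? _ -> _ ->].
move=> x y [s t a | s t v hv].
  rewrite !eval_cat.
  change (eval (a :: linv a :: t)) with (gmul (gen a) (gmul (gen (linv a)) (eval t))).
  by rewrite [gmul (gen a) _]gmulA gen_inv gmul1.
rewrite !eval_cat -(divnK h4) wpow4 ?gmul1 //; exact: sq_lin (prim_par hv).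
Qed.

Definition cw : word 2 := [:: (ord0, false); (ord0, false); (o1, false); (o1, false)].

Lemma eval_cw n : eval (wpow cw n) = (qone, ((Posz n, Posz n, Posz 0, Posz 0) : quat)).
Proof.
elim: n => [|n IH]; first by [].
rewrite -[n.+1]addn1 wpow_add eval_cat IH.
have -> : wpow cw 1 = cw ++ [::] by [].
rewrite cats0.
have -> : eval cw = (qone, ((Posz 1, Posz 1, Posz 0, Posz 0) : quat)) by vm_compute.
rewrite /gmul /= /qone PoszD; repeat f_equal; ring.
Qed.

Theorem proposition6p1 (m : nat) :
  0 < m -> 4 %| m ->
  ~ (exists L : seq (word 2), forall w : word 2, exists2 u, u \in L & bt_eq m w u).
Proof.
move=> _ h4 [L HL].
pose S := map (fun u => (eval u).2.1.1.1) L.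
have inS : forall n : nat, Posz n \in S.
  move=> n; case: (HL (wpow cw n)) => u uL /(bt_eval h4).
  rewrite eval_cw => e.
  have -> : Posz n = (eval u).2.1.1.1 by rewrite -e.
  exact: map_f.
have := @uniq_leq_size _ (map Posz (iota 0 (size S).+1)) S.
rewrite map_inj_uniq ?iota_uniq; last by move=> x y [].
move=> H; have : {subset [seq Posz i | i <- iota 0 (size S).+1] <= S}.
  by move=> x /mapP[n _ ->].
by move/(H isT); rewrite size_map size_iota ltnn.
Qed.
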